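(* Let $2<p<\infty$ and let $\mathcal{U}$ be a nonprincipal ultrafilter on $\mathbb{N}$. Let $M=\{(f_n)_{n,\mathcal{U}}\in(L^{p})^{\mathcal{U}}:\lim_{n,\mathcal{U}}\|f_n\|_2=0\}$. Then $R[(f_n)_{n,\mathcal{U}}]\in M$ for every $(f_n)_{n,\mathcal{U}}\in(L^{p})^{\mathcal{U}}$, and $R[(f_n)_{n,\mathcal{U}}]=(f_n)_{n,\mathcal{U}}$ for every $(f_n)_{n,\mathcal{U}}\in M$; hence $M$ is the range of $R$.
   Context: $L^{p}=L^{p}([0,1],\mu)$, $\mu$ Lebesgue measure ($L^p\subset L^2$ for $p>2$). $(L^{p})^{\mathcal{U}}$ is the ultrapower of $L^p$ and $(f_n)_{n,\mathcal{U}}$ the class of a bounded sequence. $R$ is the projection on $(L^{p})^{\mathcal{U}}$ given by $R[(f_n)_{n,\mathcal{U}}]=\lim_{r\to\infty}(f_nI(|f_n|>r))_{n,\mathcal{U}}$ (norm limit), with $I(|f|>r)$ the indicator of $\{|f|>r\}$. *)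

(* Defs.v *)
From HB Require Import structures.
From mathcomp Require Import all_boot all_order all_algebra.
From mathcomp Require Import all_classical all_reals all_analysis.
Set Implicit Arguments. Unset Strict Implicit. Unset Printing Implicit Defensive.
Import Order.TTheory GRing.Theory Num.Theory.
Import numFieldNormedType.Exports.
Local Open Scope classical_set_scope.
Local Open Scope ring_scope.

Section defs.
Context {R : realType}.

Definition mu01 :=
  mrestr (@lebesgue_measure R) (@measurable_itv R `[0%R, 1%R]).

Definition pnorm (p : R) (f : R -> R) : \bar R := 'N[mu01]_(p%:E) [EFin \o f].

Definition inLp (p : R) (f : R -> R) : Prop :=
  measurable_fun setT f /\ (pnorm p f < +oo)%E.

(* (F n)_n is a bounded sequence in L^p, i.e. a representative of an
   element (F n)_{n,U} of the ultrapower (L^p)^U. *)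
Definition Lp_bdd_seq (p : R) (F : nat -> R -> R) : Prop :=
  (forall n, inLp p (F n)) /\ exists C : R, forall n, (pnorm p (F n) <= C%:E)%E.

Definition ulim_is (U : set_system nat) (u : nat -> R) (l : R) : Prop :=
  forall e : R, 0 < e -> U [set n | `|u n - l| < e].

Definition cut_above (r : R) (f : R -> R) : R -> R :=
  fun x => f x * \1_[set y | r < `|f y|] x.

(* R[(F n)_{n,U}] = (G n)_{n,U}: the classes (cut_above r (F n))_{n,U}
   converge in the ultrapower norm, as r -> +oo, to (G n)_{n,U};
   the ultrapower norm of a class (H n)_{n,U} is lim_{n,U} ||H n||_p. *)
Definition Rproj_is (p : R) (U : set_system nat) (F G : nat -> R -> R) : Prop :=
  exists L : R -> R,
    (forall r, ulim_is U (fun n => fine (pnorm p (cut_above r (F n) \- G n))) (L r))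
    /\ L r @[r --> +oo] --> 0.

Definition inM (U : set_system nat) (F : nat -> R -> R) : Prop :=
  ulim_is U (fun n => fine (pnorm 2 (F n))) 0.

End defs.

(* Main.v *)
Require Import Defs.
From HB Require Import structures.
From mathcomp Require Import all_boot all_order all_algebra.
From mathcomp Require Import all_classical all_reals all_analysis.
From mathcomp Require Import ring lra measurable_realfun.
Import Order.TTheory GRing.Theory Num.Theory.
Import numFieldNormedType.Exports.
Local Open Scope classical_set_scope.
Local Open Scope ring_scope.
Section ultra.
Context {R : realType} (U : set_system nat) (UU : UltraFilter U).

Lemma U_not0 : ~ U set0.
Proof. by move=> /filter_ex [x []]. Qed.

Lemma ulim_exists (u : nat -> R) (B : R) :
  (forall n, 0 <= u n <= B) -> exists l, ulim_is U u l.
Proof.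
move=> uB.
set S := [set x : R | U [set n | x <= u n]].
have S0 : S 0 by apply: filterS filterT => n _; case/andP: (uB n).
have Sub : ubound S B.
  move=> x Sx; rewrite leNgt; apply/negP => Bx; apply: U_not0.
  apply: filterS Sx => n /= xu; case/andP: (uB n) => _ uB'.
  by move: (le_lt_trans (le_trans xu uB') Bx); rewrite ltxx.
have hs : has_sup S by split; [exists 0 | exists B].
exists (sup S) => e e0.
have [x Sx lx] := sup_adherent e0 hs.
have notS : ~ U [set n | sup S + e <= u n].
  move=> H; have := sup_upper_bound hs H.
  by rewrite leNgt ltrDl e0.
have [//|HC] := in_ultra_setVsetC [set n | sup S + e <= u n] UU.
apply: filterS (filterI Sx HC) => n /= [xu /negP].
rewrite -ltNge => ulte.
rewrite ltr_norml; apply/andP; split; lra.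
Qed.

Lemma ulim_le (u v : nat -> R) l m :
  ulim_is U u l -> ulim_is U v m -> (forall n, u n <= v n) -> l <= m.
Proof.
move=> hu hv uv; rewrite leNgt; apply/negP => ml.
have e0 : 0 < (l - m) / 2 by rewrite divr_gt0 // subr_gt0.
apply: U_not0; apply: filterS (filterI (hu _ e0) (hv _ e0)) => n /= [].
rewrite !ltr_norml => /andP[h1 _] /andP[_ h2].
have := uv n; lra.
Qed.

Lemma ulimB (u v : nat -> R) l m :
  ulim_is U u l -> ulim_is U v m -> ulim_is U (fun n => u n - v n) (l - m).
Proof.
move=> hu hv e e0.
have e2 : 0 < e / 2 by rewrite divr_gt0.
apply: filterS (filterI (hu _ e2) (hv _ e2)) => n /= [h1 h2].
move: h1 h2; rewrite !ltr_norml => /andP[? ?] /andP[? ?]; apply/andP; split; lra.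
Qed.

Lemma ulim_ext (u v : nat -> R) l : (forall n, u n = v n) ->
  ulim_is U u l -> ulim_is U v l.
Proof. by move=> uv hu e e0; apply: filterS (hu e e0) => n /=; rewrite uv. Qed.

Lemma ulim_squeeze0 (u w : nat -> R) :
  (forall n, 0 <= u n <= w n) -> ulim_is U w 0 -> ulim_is U u 0.
Proof.
move=> uw hw e e0; apply: filterS (hw e e0) => n /=.
case/andP: (uw n) => u0 uw'; rewrite !subr0 => h.
by rewrite ger0_norm // (le_lt_trans uw') // (le_lt_trans (ler_norm _)).
Qed.

Lemma ulim_norm (u : nat -> R) l : ulim_is U u l ->
  ulim_is U (fun n => `|u n|) `|l|.
Proof.
move=> hu e e0; apply: filterS (hu e e0) => n /= h.
exact: le_lt_trans (ler_dist_dist _ _) h.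
Qed.

Lemma ulimZ (u : nat -> R) l c : ulim_is U u l ->
  ulim_is U (fun n => c * u n) (c * l).
Proof.
move=> hu e e0.
have e1 : 0 < e / (`|c| + 1) by rewrite divr_gt0 // ltr_pwDr.
apply: filterS (hu _ e1) => n /= h.
rewrite -mulrBr normrM.
apply: (le_lt_trans (y := (`|c| + 1) * `|u n - l|)).
  by rewrite ler_wpM2r // lerDl.
by rewrite mulrC -ltr_pdivlMr // ltr_pwDr.
Qed.

Lemma U_ge (nonp : forall n, ~ U [set n]) k : U [set n | (k <= n)%N].
Proof.
elim: k => [|k IH]; first by apply: filterS filterT.
have [//|HC] := in_ultra_setVsetC [set n | (k.+1 <= n)%N] UU.
exfalso; apply: (nonp k); apply: filterS (filterI IH HC) => n /= [kn /negP].
by rewrite -ltnNge ltnS => nk; apply/eqP; rewrite eqn_leq nk kn.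
Qed.

End ultra.
Section pow.
Context {R : realType}.

Lemma le_powR01 (t q : R) : 0 <= t <= 1 -> 0 < q <= 1 -> t <= t `^ q.
Proof.
move=> /andP[t0 t1] /andP[q0 q1].
have [->|tn0] := eqVneq t 0; first by rewrite powR0 ?gt_eqF.
by apply: ger1_powR => //; rewrite t1 andbT lt_neqAle eq_sym tn0.
Qed.

Lemma powR_subadd (a b q : R) : 0 <= a -> 0 <= b -> 0 < q <= 1 ->
  (a + b) `^ q <= a `^ q + b `^ q.
Proof.
move=> a0 b0 hq; have [s0|] := eqVneq (a + b) 0.
  have a00 : a = 0 by lra.
  have b00 : b = 0 by lra.
  by rewrite s0 a00 b00 powR0 ?addr0 // gt_eqF //; case/andP: hq.
move=> sn0; have sp : 0 < a + b by rewrite lt_neqAle eq_sym sn0 addr_ge0.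
have ha : (a + b) `^ q * (a / (a + b)) <= a `^ q.
  have -> : a `^ q = (a + b) `^ q * (a / (a + b)) `^ q.
    by rewrite -powRM ?divr_ge0 ?(ltW sp) // mulrC divfK // gt_eqF.
  rewrite ler_wpM2l ?powR_ge0 //; apply: le_powR01 => //.
  by rewrite divr_ge0 ?(ltW sp) //= ler_pdivrMr //; lra.
have hb : (a + b) `^ q * (b / (a + b)) <= b `^ q.
  have -> : b `^ q = (a + b) `^ q * (b / (a + b)) `^ q.
    by rewrite -powRM ?divr_ge0 ?(ltW sp) // mulrC divfK // gt_eqF.
  rewrite ler_wpM2l ?powR_ge0 //; apply: le_powR01 => //.
  by rewrite divr_ge0 ?(ltW sp) //= ler_pdivrMr //; lra.
apply: le_trans (lerD ha hb).
by rewrite -mulrDr -mulrDl divff ?mulr1 // gt_eqF.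
Qed.

Lemma powR_holder (x y q : R) : 0 <= x -> 0 <= y -> 0 < q <= 1 ->
  `|x `^ q - y `^ q| <= `|x - y| `^ q.
Proof.
wlog xy : x y / y <= x.
  move=> H x0 y0 hq; have [yx|xy] := leP y x; first exact: H.
  by rewrite distrC (distrC x); apply: H => //; exact: ltW.
move=> x0 y0 hq.
have hq0 : 0 <= q by case/andP: hq => /ltW.
have yxq : y `^ q <= x `^ q by apply: ge0_ler_powR.
rewrite ger0_norm ?subr_ge0 // ger0_norm ?subr_ge0 //.
rewrite lerBlDr.
have := @powR_subadd (x - y) y q; rewrite subrK; apply => //.
by rewrite subr_ge0.
Qed.

End pow.

Section ultra2.
Context {R : realType} (U : set_system nat) (UU : UltraFilter U).

Lemma ulim_powR (u : nat -> R) l q : (forall n, 0 <= u n) -> 0 <= l ->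
  0 < q <= 1 -> ulim_is U u l -> ulim_is U (fun n => u n `^ q) (l `^ q).
Proof.
move=> u0 l0 hq hu e e0.
have q0 : 0 < q by case/andP: hq.
have d0 : 0 < e `^ q^-1 by apply: powR_gt0.
apply: filterS (hu _ d0) => n /= h.
have H := @powR_holder _ (u n) l q (u0 n) l0 hq.
have He : e = (e `^ q^-1) `^ q by rewrite -powRrM mulVf ?gt_eqF // powRr1 // ltW.
rewrite He; apply: (le_lt_trans H).
apply: gt0_ltr_powR => //; rewrite ?nnegrE //; exact: ltW.
Qed.
End ultra2.
Section integ.
Context {R : realType}.
Local Notation mu := (@mu01 R).

Definition Ip (q : R) (h : R -> R) : \bar R := (\int[mu]_x (`|h x| `^ q)%:E)%E.

Lemma pnormE (q : R) (h : R -> R) : pnorm q h = (Ip q h `^ q^-1)%E.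
Proof.
rewrite /pnorm /Ip unlock /=; congr (_ `^ _)%E.
Qed.

Lemma IpE (q : R) (h : R -> R) : q != 0 -> Ip q h = (pnorm q h `^ q)%E.
Proof.
move=> q0; rewrite /pnorm powR_Lnorm //; rewrite /Ip.
Qed.

Lemma mu01T : mu setT = 1%E.
Proof.
rewrite /mu01 /mrestr setTI lebesgue_measure_itv /=.
by rewrite lte_fin ltr01 sube0.
Qed.


Lemma mpow (q : R) (h : R -> R) : measurable_fun setT h ->
  measurable_fun setT (fun x => (`|h x| `^ q)%:E : \bar R).
Proof.
move=> mh; apply/measurable_EFinP.
apply: (measurableT_comp (measurable_powR q)).
by apply: (@measurableT_comp _ _ _ _ _ _ (@Num.norm _ R)) => //; exact: normr_measurable.
Qed.

Lemma Ip_ge0 (q : R) (h : R -> R) : (0 <= Ip q h)%E.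
Proof. by apply: integral_ge0 => x _; rewrite lee_fin powR_ge0. Qed.

Lemma Ip_le (q : R) (h g : R -> R) : measurable_fun setT h -> measurable_fun setT g ->
  0 <= q -> (forall x, `|h x| <= `|g x|) -> (Ip q h <= Ip q g)%E.
Proof.
move=> mh mg q0 hg; apply: (ge0_le_integral _ measurableT).
- by move=> x _; rewrite lee_fin powR_ge0.
- exact: mpow.
- exact: mpow.
- by move=> x _; rewrite lee_fin ge0_ler_powR.
Qed.

Lemma Ip_fin (q : R) (h : R -> R) : 0 < q -> (pnorm q h < +oo)%E -> (Ip q h < +oo)%E.
Proof.
move=> q0 hf; rewrite IpE ?gt_eqF //.
have : (0 <= pnorm q h)%E by rewrite /pnorm Lnorm_ge0.
case: (pnorm q h) hf => // x _ x0.
by rewrite poweR_EFin ltry.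
Qed.

Definition J (q : R) (h : R -> R) := fine (Ip q h).

Lemma IpJ (q : R) (h : R -> R) : (Ip q h < +oo)%E -> Ip q h = (J q h)%:E.
Proof.
by move=> hf; rewrite /J fineK // ge0_fin_numE // Ip_ge0.
Qed.

Lemma J_ge0 (q : R) (h : R -> R) : 0 <= J q h.
Proof. by rewrite /J fine_ge0 // Ip_ge0. Qed.

Lemma fine_pnorm (q : R) (h : R -> R) : (Ip q h < +oo)%E -> fine (pnorm q h) = J q h `^ q^-1.
Proof. by move=> hf; rewrite pnormE IpJ // poweR_EFin. Qed.


Lemma cutE (r : R) (f : R -> R) x :
  cut_above r f x = if r < `|f x| then f x else 0.
Proof.
rewrite /cut_above indicE; case: ifPn => h.
  by rewrite mem_set ?mulr1.
by rewrite memNset ?mulr0 //= => h'; move/negP: h; apply.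
Qed.

Lemma cut_meas (r : R) (f : R -> R) : measurable_fun setT f ->
  measurable_fun setT (cut_above r f).
Proof.
move=> mf; apply: measurable_funM => //; apply/measurable_indicP.
have mB : measurable [set y : R | r < `|y|].
  have -> : [set y : R | r < `|y|] = setT `&` (@Num.norm _ R) @^-1` `]r, +oo[.
    rewrite setTI; apply/seteqP; split => y /=.
      by move=> h; rewrite /preimage /= in_itv /= andbT.
    by rewrite /preimage /= in_itv /= andbT.
  by apply: normr_measurable => //; exact: measurable_itv.
have := mf measurableT _ mB; rewrite setTI.
by congr measurable.
Qed.

Lemma cut_abs (r : R) f x : `|cut_above r f x| <= `|f x|.
Proof. by rewrite cutE; case: ifP => // _; rewrite normr0. Qed.


Lemma cut_split (q r s : R) (f : R -> R) x : 0 < q -> r <= s ->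
  `|cut_above r f x| `^ q =
  `|cut_above r f x - cut_above s f x| `^ q + `|cut_above s f x| `^ q.
Proof.
move=> q0 rs; rewrite !cutE.
have q0' : q != 0 by rewrite gt_eqF.
case: ltP => hr; case: ltP => hs.
- by rewrite subrr normr0 powR0 // add0r.
- by rewrite subr0 normr0 powR0 // addr0.
- by exfalso; move: (le_lt_trans rs hs); rewrite ltNge hr.
- by rewrite subr0 normr0 powR0 // addr0.
Qed.

Lemma cutB_abs (r s : R) (f : R -> R) x :
  `|cut_above r f x - cut_above s f x| <= `|f x|.
Proof.
rewrite !cutE; case: ifP => _; case: ifP => _;
  by rewrite ?subrr ?subr0 ?sub0r ?normrN ?normr0.
Qed.

Lemma Ip_cut_split (q r s : R) (f : R -> R) : measurable_fun setT f ->
  0 < q -> r <= s ->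
  Ip q (cut_above r f) = (Ip q (cut_above r f \- cut_above s f)%R + Ip q (cut_above s f))%E.
Proof.
move=> mf q0 rs; rewrite /Ip -ge0_integralD //.
- by apply: eq_integral => x _; rewrite (cut_split _ _ _ _ _ q0 rs) EFinD.
- by apply: mpow; apply: measurable_funB; exact: cut_meas.
- by apply: mpow; exact: cut_meas.
Qed.

Lemma J_cutB (q r s : R) (f : R -> R) : measurable_fun setT f ->
  0 < q -> r <= s -> (Ip q f < +oo)%E ->
  J q (cut_above r f \- cut_above s f) = J q (cut_above r f) - J q (cut_above s f).
Proof.
move=> mf q0 rs fin.
have mc t : measurable_fun setT (cut_above t f) by exact: cut_meas.
have f1 : (Ip q (cut_above r f) < +oo)%E.
  by apply: le_lt_trans fin; apply: (Ip_le _ _ _ (mc r) mf (ltW q0)) => x; exact: cut_abs.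
have f2 : (Ip q (cut_above s f) < +oo)%E.
  by apply: le_lt_trans fin; apply: (Ip_le _ _ _ (mc s) mf (ltW q0)) => x; exact: cut_abs.
have f3 : (Ip q (cut_above r f \- cut_above s f)%R < +oo)%E.
  apply: le_lt_trans fin; apply: (Ip_le _ _ _ _ mf (ltW q0)).
    exact: measurable_funB.
  by move=> x; exact: cutB_abs.
have := Ip_cut_split _ _ _ _ mf q0 rs.
rewrite (IpJ _ _ f1) (IpJ _ _ f2) (IpJ _ _ f3) -EFinD => -[->].
by rewrite addrK.
Qed.


Lemma powR_split (y p : R) : 0 < p -> y `^ p = y `^ 2 * y `^ (p - 2).
Proof.
move=> p0; rewrite -powRD; first by congr (_ `^ _); ring.
by apply/implyP => /eqP h; exfalso; lra.
Qed.

Lemma Ip2_cut (p s : R) (f : R -> R) : 2 < p -> 0 < s -> measurable_fun setT f ->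
  ((s `^ (p - 2))%:E * Ip 2 (cut_above s f) <= Ip p f)%E.
Proof.
move=> p2 s0 mf.
have ps : 0 <= s `^ (p - 2) by exact: powR_ge0.
have m1 := mpow 2 _ (cut_meas s f mf).
have n1 : forall x, setT x -> (0 <= (`|cut_above s f x| `^ 2)%:E)%E.
  by move=> x _; rewrite lee_fin powR_ge0.
rewrite /Ip -(ge0_integralZl_EFin mu measurableT n1 m1 ps).
apply: (ge0_le_integral _ measurableT).
- by move=> x _; rewrite lee_fin mulr_ge0 // powR_ge0.
- by apply: measurable_funeM; apply: mpow; exact: cut_meas.
- exact: mpow.
move=> x _; rewrite lee_fin cutE; case: ifPn => h.
  rewrite (powR_split `|f x| p); last lra.
  rewrite mulrC ler_wpM2l ?powR_ge0 //.
  apply: ge0_ler_powR; rewrite ?nnegrE ?(ltW s0) //; first lra.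
  exact: ltW.
by rewrite normr0 powR0 // mulr0 powR_ge0.
Qed.

Lemma Ip_cut_small (p r : R) (f : R -> R) : 2 < p -> measurable_fun setT f ->
  (Ip p (cut_above r f \- f)%R <= ((Num.max r 1) `^ (p - 2))%:E * Ip 2 f)%E.
Proof.
move=> p2 mf.
have ps : 0 <= (Num.max r 1) `^ (p - 2) by exact: powR_ge0.
have m1 := mpow 2 _ mf.
have n1 : forall x, setT x -> (0 <= (`|f x| `^ 2)%:E)%E.
  by move=> x _; rewrite lee_fin powR_ge0.
rewrite /Ip -(ge0_integralZl_EFin mu measurableT n1 m1 ps).
apply: (ge0_le_integral _ measurableT).
- by move=> x _; rewrite lee_fin powR_ge0.
- by apply: mpow; apply: measurable_funB => //; exact: cut_meas.
- by apply: measurable_funeM; apply: mpow.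
move=> x _; rewrite /= lee_fin cutE; case: ifPn => h.
  by rewrite subrr normr0 powR0 ?mulr_ge0 ?powR_ge0 //; lra.
rewrite sub0r normrN (powR_split `|f x| p); last lra.
rewrite [X in X <= _]mulrC ler_wpM2r ?powR_ge0 //.
apply: ge0_ler_powR; rewrite ?nnegrE //; first lra.
  by rewrite le_max ler01 orbT.
rewrite -leNgt in h; apply: (le_trans h).
by rewrite le_max lexx.
Qed.

Lemma Ip2_fin (p : R) (f : R -> R) : 2 <= p -> measurable_fun setT f ->
  (Ip p f < +oo)%E -> (Ip 2 f < +oo)%E.
Proof.
move=> p2 mf fin.
have : (Ip 2 f <= Ip p f + 1)%E.
  rewrite /Ip.
  have -> : (1 = \int[mu]_x (cst 1%E x))%E.
    by rewrite (integral_cst mu) // mul1e; symmetry; exact: mu01T.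
  rewrite -ge0_integralD //; last exact: mpow.
  apply: (ge0_le_integral _ measurableT).
  - by move=> x _; rewrite lee_fin powR_ge0.
  - exact: mpow.
  - by apply: emeasurable_funD => //; exact: mpow.
  move=> x _; rewrite /= -EFinD lee_fin.
  have [y1|y1] := leP `|f x| 1.
    apply: (le_trans (y := 1)); last by rewrite lerDr powR_ge0.
    have := @ge0_ler_powR _ 2 ltac:(lra) `|f x| 1.
    rewrite powR1; apply => //; rewrite nnegrE //.
  apply: (le_trans (y := `|f x| `^ p)); last by rewrite lerDl.
  by apply: ler_powR => //; exact: ltW.
move=> h; apply: le_lt_trans h _.
by rewrite -(fineK (x := Ip p f)) ?ge0_fin_numE ?Ip_ge0 // -EFinD ltry.
Qed.

End integ.
Section main.
Context {R : realType} (p : R) (hp : 2 < p) (U : set_system nat)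
  (UU : UltraFilter U).

Lemma pnorm_ge0 q (h : R -> R) : 0 <= fine (pnorm q h).
Proof. by rewrite fine_ge0 // /pnorm Lnorm_ge0. Qed.

Lemma part2 (F : nat -> R -> R) : Lp_bdd_seq p F -> inM U F -> Rproj_is p U F F.
Proof.
move=> [hF _] hM; exists (fun _ => 0); split; last exact: cvg_cst.
move=> r.
have p0 : 0 < p by apply: lt_trans hp.
set c := (Num.max r 1 `^ (p - 2)) `^ p^-1.
set q := 2 / p.
have hq : 0 < q <= 1.
  by rewrite /q divr_gt0 //= ler_pdivrMr // mul1r ltW.
have eq2 : 2^-1 * q = p^-1 by rewrite /q mulrA mulVf ?mul1r // pnatr_eq0.
apply: (@ulim_squeeze0 _ U UU _ (fun n => c * (fine (pnorm 2 (F n)) `^ q))).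
  move=> n; have [mf pf] := hF n.
  have finp := Ip_fin p (F n) p0 pf.
  have fin2 := Ip2_fin p (F n) (ltW hp) mf finp.
  have hs := Ip_cut_small p r (F n) hp mf.
  have fin3 : (Ip p (cut_above r (F n) \- F n)%R < +oo)%E.
    by apply: (le_lt_trans hs); rewrite (IpJ _ _ fin2) -EFinM ltry.
  rewrite fine_pnorm // fine_pnorm //; apply/andP; split; first exact: powR_ge0.
  rewrite -powRrM eq2 /c -powRM ?powR_ge0 ?J_ge0 //.
  apply: ge0_ler_powR; rewrite ?nnegrE ?J_ge0 ?mulr_ge0 ?powR_ge0 ?J_ge0 //; first lra.
  by move: hs; rewrite (IpJ _ _ fin3) (IpJ _ _ fin2) -EFinM lee_fin.
have := ulimZ U UU _ _ c (ulim_powR U UU _ _ q (fun n => pnorm_ge0 2 (F n)) (lexx 0) hq hM).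
by rewrite powR0 ?mulr0 // gt_eqF //; case/andP: hq.
Qed.


Lemma ulim_cst (c : R) : ulim_is U (fun _ => c) c.
Proof. by move=> e e0; apply: filterS filterT => n _; rewrite subrr normr0. Qed.

Lemma nat_gt (x : R) : exists K : nat, x < K%:R /\ (1 <= K)%N.
Proof. by exists (Num.Def.truncn x).+1; split => //; exact: truncnS_gt. Qed.

Lemma part1 (nonp : forall n : nat, ~ U [set n]) (F : nat -> R -> R) :
  Lp_bdd_seq p F ->
  exists G : nat -> R -> R, Lp_bdd_seq p G /\ Rproj_is p U F G /\ inM U G.
Proof.
move=> [hF [C hC]].
have p0 : 0 < p by apply: lt_trans hp.
have mF n : measurable_fun setT (F n) by case: (hF n).
have finF n : (Ip p (F n) < +oo)%E by apply: Ip_fin p0 _; case: (hF n).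
have pnE (h : R -> R) : (Ip p h < +oo)%E -> pnorm p h = ((J p h) `^ p^-1)%:E.
  by move=> fh; rewrite pnormE (IpJ _ _ fh) poweR_EFin.
set B := C `^ p.
have JF n : J p (F n) <= B.
  have := hC n; rewrite pnE // lee_fin => h.
  have -> : J p (F n) = (J p (F n) `^ p^-1) `^ p.
    by rewrite -powRrM mulVf ?gt_eqF // powRr1 // J_ge0.
  by apply: ge0_ler_powR; rewrite ?nnegrE ?powR_ge0 //; [exact: ltW|
    apply: le_trans h; exact: powR_ge0].
pose b n r := J p (cut_above r (F n)).
have finc n r : (Ip p (cut_above r (F n)) < +oo)%E.
  apply: le_lt_trans (finF n); apply: (Ip_le _ _ _ (cut_meas _ _ (mF n)) (mF n) (ltW p0)).
  by move=> x; exact: cut_abs.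
have b0 n r : 0 <= b n r by exact: J_ge0.
have bF n r : b n r <= J p (F n).
  have := Ip_le _ _ _ (cut_meas r _ (mF n)) (mF n) (ltW p0) (fun x => cut_abs r (F n) x).
  by rewrite (IpJ _ _ (finc n r)) (IpJ _ _ (finF n)) lee_fin.
have bB n r : b n r <= B by apply: le_trans (JF n).
have banti n r s : r <= s -> b n s <= b n r.
  move=> rs; have := J_cutB p r s (F n) (mF n) p0 rs (finF n).
  by rewrite -subr_ge0 => <-; exact: J_ge0.
have bdist n r s : J p (cut_above r (F n) \- cut_above s (F n))%R = `|b n r - b n s|.
  have [rs|sr] := leP r s.
    by rewrite J_cutB // ger0_norm // subr_ge0 banti.
  have -> : J p (cut_above r (F n) \- cut_above s (F n))%R =
            J p (cut_above s (F n) \- cut_above r (F n))%R.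
    by rewrite /J /Ip; congr fine; apply: eq_integral => x _ /=; rewrite distrC.
  rewrite J_cutB //; last exact: ltW.
  by rewrite distrC ger0_norm // subr_ge0 banti // ltW.
have ha r : exists l, ulim_is U (fun n => b n r) l.
  by apply: (ulim_exists U UU _ B) => n; rewrite b0 bB.
have [a Ha] := choice ha.
have a0 r : 0 <= a r := ulim_le U UU _ _ _ _ (ulim_cst 0) (Ha r) (fun n => b0 n r).
have aanti r s : r <= s -> a s <= a r.
  by move=> rs; exact: (ulim_le U UU _ _ _ _ (Ha s) (Ha r) (fun n => banti n r s rs)).
set ainf := inf (range a).
have hinf : has_inf (range a).
  by split; [exists (a 0), 0|exists 0 => _ [r _ <-]].
have ainf_le r : ainf <= a r by apply: (ge_inf hinf.2); exists r.
have ainf_adh e : 0 < e -> exists r0, a r0 < ainf + e.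
  by move=> e0; have [_ [r0 _ <-] h] := inf_adherent e0 hinf; exists r0.
pose Aset k := [set n | (k <= n)%N /\ forall j, (j <= k)%N ->
   `|b n j%:R - a j%:R| < (j.+1%:R)^-1].
have UA k : U (Aset k).
  elim: k => [|k IH].
    apply: filterS (Ha 0%:R 1 ltr01) => n /= h; split => // j.
    by rewrite leqn0 => /eqP ->; rewrite invr1.
  have e0 : 0 < (k.+2%:R : R)^-1 by rewrite invr_gt0 ltr0n.
  apply: filterS (filterI IH (filterI (U_ge U UU nonp k.+1) (Ha (k.+1)%:R _ e0))).
  move=> n [[_ hj] [kn h]]; split => // j.
  rewrite leq_eqVlt => /orP[/eqP -> //|]; rewrite ltnS; exact: hj.
pose P n k := (k == 0)%N || `[< Aset k n >].
have exP n : exists k, P n k by exists 0%N.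
have ubP n k : P n k -> (k <= n)%N.
  by case/orP => [/eqP -> //|/asboolP []].
pose kn n := ex_maxn (exP n) (ubP n).
have knP n K : Aset K n -> (K <= kn n)%N /\ P n (kn n).
  rewrite /kn; case: ex_maxnP => i Pi Hi hK; split => //.
  by apply: Hi; apply/orP; right; exact/asboolP.
have knA n K : (1 <= K)%N -> Aset K n -> (K <= kn n)%N /\ Aset (kn n) n.
  move=> K1 hK; have [Kk /orP[/eqP k0|/asboolP //]] := knP n K hK.
  by exfalso; move: Kk K1; rewrite k0; case: K {hK}.
pose s n := (kn n)%:R : R.
have diag : ulim_is U (fun n => b n (s n)) ainf.
  move=> e e0.
  have e2 : 0 < e / 2 by rewrite divr_gt0.
  have [r0 hr0] := ainf_adh _ e2.
  have [K1 [hK1 K11]] := nat_gt r0.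
  have [K2 [hK2 _]] := nat_gt (e / 2)^-1.
  set K := maxn K1 K2.
  have K1K : (K1 <= K)%N by exact: leq_maxl.
  have K2K : (K2 <= K)%N by exact: leq_maxr.
  apply: filterS (UA K) => n hn.
  have [Kk hk] := knA n K (leq_trans K11 K1K) hn.
  have hb := hk.2 (kn n) (leqnn _).
  have i1 : ((kn n).+1%:R : R)^-1 <= (K.+1%:R)^-1.
    by rewrite lef_pV2 ?posrE ?ltr0n // ler_nat.
  have i2 : (K.+1%:R : R)^-1 < e / 2.
    rewrite -[e / 2]invrK ltf_pV2 ?posrE ?ltr0n ?invr_gt0 //.
    apply: (lt_le_trans hK2); rewrite ler_nat; apply: leq_trans K2K _; exact: leqnSn.
  have a1 : a (s n) <= a r0.
    apply: aanti; apply: (le_trans (ltW hK1)); rewrite /s ler_nat.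
    exact: leq_trans K1K Kk.
  have a2 := ainf_le (s n).
  rewrite /s in a1 a2 hb |- *.
  move: hb; rewrite ltr_norml => /andP[h1 h2].
  rewrite /= ltr_norml; move: (kn n) h1 h2 i1 i2 a1 a2 hr0 => k h1 h2 i1 i2 a1 a2 hr0; clearbody ainf.
  move: (k.+1%:R^-1) (K.+1%:R^-1) (b n k%:R) (a k%:R) (a r0) h1 h2 i1 i2 a1 a2 hr0 => v w x y z *.
  apply/andP; split; lra.
exists (fun n => cut_above (s n) (F n)).
have finG n : (Ip p (cut_above (s n) (F n)) < +oo)%E by exact: finc.
split.
  split.
    move=> n; split; first exact: cut_meas.
    by rewrite pnE // ltry.
  exists C => n.
  have h1 := hC n.
  rewrite (pnE _ (finG n)).
  rewrite (pnE _ (finF n)) in h1.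
  apply: le_trans h1; rewrite lee_fin; apply: ge0_ler_powR.
  - by rewrite invr_ge0 ltW.
  - by rewrite nnegrE J_ge0.
  - by rewrite nnegrE J_ge0.
  - exact: bF.
split.
  exists (fun r => `|a r - ainf| `^ p^-1); split.
    move=> r.
    have hq : 0 < p^-1 <= 1.
      have p1 : 1 <= p by apply: ltW; apply: lt_trans hp; rewrite ltr1n.
      by rewrite invr_gt0 p0 /= (invf_le1 p0) p1.
    apply: (ulim_ext U UU (fun n => `|b n r - b n (s n)| `^ p^-1)).
      move=> n.
      have fd : (Ip p (cut_above r (F n) \- cut_above (s n) (F n))%R < +oo)%E.
        apply: le_lt_trans (finF n); apply: (Ip_le _ _ _ _ (mF n) (ltW p0)).
        - by apply: measurable_funB; exact: cut_meas.
        - by move=> x; exact: cutB_abs.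
      by rewrite (fine_pnorm _ _ fd) bdist.
    apply: (ulim_powR U UU _ _ _ (fun n => normr_ge0 _) (normr_ge0 _) hq).
    apply: ulim_norm; apply: ulimB; [exact: Ha | exact: diag].
  apply/cvgrPdist_lt => e e0.
  have ep : 0 < e `^ p by exact: powR_gt0.
  have [r0 hr0] := ainf_adh _ ep.
  exists r0; split; first exact: num_real.
  move=> r hr.
  rewrite sub0r normrN ger0_norm; last exact: powR_ge0.
  have -> : e = (e `^ p) `^ p^-1.
    by rewrite -powRrM mulfV ?gt_eqF // powRr1 // ltW.
  apply: gt0_ltr_powR.
  - by rewrite invr_gt0.
  - by rewrite nnegrE normr_ge0.
  - by rewrite nnegrE powR_ge0.
  rewrite ger0_norm; last by rewrite subr_ge0 ainf_le.
  have := aanti r0 r (ltW hr).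
  move: (a r) (a r0) (e `^ p) hr0 => x y z h1 h2; clearbody ainf; lra.
move=> e e0.
have B0 : 0 <= B by exact: powR_ge0.
have ee : 0 < e * e by rewrite mulr_gt0.
set M := B / (e * e).
have M0 : 0 <= M by rewrite divr_ge0 // ltW.
have [K [hK K1]] := nat_gt (M `^ (p - 2)^-1).
apply: filterS (UA K) => n hn /=.
have [Kk hk] := knA n K K1 hn.
have sK : K%:R <= s n by rewrite /s ler_nat.
have K0 : (0 : R) < K%:R by rewrite ltr0n.
have s0 : 0 < s n by exact: lt_le_trans K0 sK.
have hpm : 0 < p - 2 by rewrite subr_gt0.
have Ms : M < s n `^ (p - 2).
  have -> : M = (M `^ (p - 2)^-1) `^ (p - 2).
    by rewrite -powRrM mulVf ?gt_eqF // powRr1.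
  apply: (lt_le_trans (y := K%:R `^ (p - 2))).
    apply: gt0_ltr_powR => //; rewrite nnegrE ?powR_ge0 //; exact: ltW.
  apply: ge0_ler_powR => //; [exact: ltW| rewrite nnegrE; exact: ltW|
    rewrite nnegrE; exact: ltW].
have fin2 : (Ip 2 (cut_above (s n) (F n)) < +oo)%E.
  apply: (Ip2_fin p _ (ltW hp) (cut_meas _ _ (mF n)) (finG n)).
have hc := Ip2_cut p (s n) (F n) hp s0 (mF n).
rewrite (IpJ _ _ fin2) (IpJ _ _ (finF n)) -EFinM lee_fin in hc.
have JB := JF n.
have J2lt : J 2 (cut_above (s n) (F n)) < e * e.
  rewrite ltNge; apply/negP => h.
  have h1 : s n `^ (p - 2) * (e * e) <= s n `^ (p - 2) * J 2 (cut_above (s n) (F n)).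
    by rewrite ler_wpM2l // powR_ge0.
  have h2 : M * (e * e) < s n `^ (p - 2) * (e * e) by rewrite ltr_pM2r.
  have h3 : M * (e * e) = B by rewrite /M divfK // gt_eqF.
  move: (s n `^ (p - 2) * (e * e)) (s n `^ (p - 2) * J 2 (cut_above (s n) (F n)))
    (M * (e * e)) h1 h2 h3 hc JB => x y z h1 h2 h3 hc' JB'.
  clear -h1 h2 h3 hc' JB'; move: (J p (F n)) hc' JB' => w *; lra.
rewrite subr0 ger0_norm; last exact: pnorm_ge0.
rewrite (fine_pnorm _ _ fin2).
have -> : e = (e * e) `^ 2^-1.
  by rewrite powR12_sqrt ?(ltW ee) // -expr2 sqrtr_sqr ger0_norm // ltW.
apply: gt0_ltr_powR => //; rewrite nnegrE ?J_ge0 //; exact: ltW.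
Qed.

End main.

Theorem lemma5p2 (R : realType) (p : R) (U : set_system nat) :
  2 < p -> UltraFilter U -> (forall n : nat, ~ U [set n]) ->
  (forall F : nat -> R -> R, Lp_bdd_seq p F ->
     exists G : nat -> R -> R, Lp_bdd_seq p G /\ Rproj_is p U F G /\ inM U G) /\
  (forall F : nat -> R -> R, Lp_bdd_seq p F -> inM U F -> Rproj_is p U F F).
Proof.
move=> hp UU nonp; split.
  by move=> F hF; exact: (part1 p hp U UU nonp F hF).
by move=> F hF hM; exact: (part2 p hp U UU F hF hM).
Qed.
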